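(* Let $p$ be an odd prime and let $\alpha$ be a root of $H_p(X,1)$. For a positive integer $M$ let $\zeta_M$ denote a primitive $M$-th root of unity. Then $\mathbb{Q}(\alpha)=\mathbb{Q}(\zeta_{4p}+\zeta_{4p}^{-1})$ (inside $\mathbb{C}$, with $\zeta_{4p}=e^{2\pi i/(4p)}$); in particular $[\mathbb{Q}(\alpha):\mathbb{Q}]=p-1$, and $\mathbb{Q}(\zeta_p+\zeta_p^{-1})\subset\mathbb{Q}(\alpha)$ for $\zeta_p=\zeta_{4p}^4$.
   Context: For an odd prime $p$ put $\delta_4=1$ if $p\equiv 1\pmod 4$, $\delta_4=-1$ if $p\equiv 3\pmod 4$. Let $G_p(u,v)=\mathrm{Im}\big((1+i)(u+iv)^p\big)\in\mathbb{Z}[u,v]$ (for real $u,v$); $u+\delta_4 v$ divides $G_p$ in $\mathbb{Z}[u,v]$, and $H_p(u,v):=G_p(u,v)/(u+\delta_4 v)\in\mathbb{Z}[u,v]$. The roots of $H_p(X,1)$ are the $p-1$ real numbers $\tan\frac{(4j+3)\pi}{4p}$, $j\in\{0,\dots,p-1\}$, different from $-\delta_4$. *)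

(* Defs.v *)
From HB Require Import structures.
From mathcomp Require Import all_boot all_order all_algebra all_field.
Set Implicit Arguments. Unset Strict Implicit. Unset Printing Implicit Defensive.
Import Order.TTheory GRing.Theory Num.Theory.
Local Open Scope ring_scope.

Definition delta4 (p : nat) : algC := if (p %% 4 == 1)%N then 1 else -1.

(* G_p(X,1) = Im((1+i)(X+i)^p) for real X: the polynomial whose coefficients
   are the imaginary parts of those of (1+i)(X+i)^p. *)
Definition Gp (p : nat) : {poly algC} :=
  map_poly (fun c : algC => 'Im c) ((1 + 'i)%:P * ('X + ('i)%:P) ^+ p).

Definition Hp (p : nat) : {poly algC} := Gp p %/ ('X + (delta4 p)%:P).

(* b lies in Q(a): b belongs to every subfield of algC containing a *)
Definition in_Qadj (a b : algC) : Prop :=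
  forall S : {pred algC}, divring_closed S -> a \in S -> b \in S.

(* zeta_M = e^{2 pi i / M} for M = 2n: n.-root (-1) is exp(i pi / n) *)
Definition zeta4p (p : nat) : algC := (2 * p)%N.-root (-1).

(* Main.v *)
Require Import Defs.
From HB Require Import structures.
From mathcomp Require Import all_boot all_order all_algebra all_field.
From mathcomp Require Import ring lra zify.
Set Implicit Arguments. Unset Strict Implicit. Unset Printing Implicit Defensive.
Import Order.TTheory GRing.Theory Num.Theory.
Local Open Scope ring_scope.
Section DC.
Variable S : {pred algC}.
Hypothesis hS : GRing.divring_closed S.
Lemma S1 : 1 \in S. Proof. by case: hS. Qed.
Lemma SB x y : x \in S -> y \in S -> x - y \in S.
Proof. by case: hS => _ h _; apply: h. Qed.
Lemma Sdiv x y : x \in S -> y \in S -> x / y \in S.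
Proof. by case: hS => _ _ h; apply: h. Qed.
Lemma S0 : 0 \in S. Proof. by rewrite -(subrr 1) SB ?S1. Qed.
Lemma SN x : x \in S -> - x \in S. Proof. by move=> h; rewrite -sub0r SB ?S0. Qed.
Lemma SD x y : x \in S -> y \in S -> x + y \in S.
Proof. by move=> hx hy; rewrite -(opprK y) SB ?SN. Qed.
Lemma SV x : x \in S -> x^-1 \in S.
Proof. by move=> h; rewrite -div1r Sdiv ?S1. Qed.
Lemma SM x y : x \in S -> y \in S -> x * y \in S.
Proof. by move=> hx hy; rewrite -(invrK y) Sdiv ?SV. Qed.
Lemma Sn n : n%:R \in S.
Proof. by elim: n => [|n IH]; rewrite ?S0 // -addn1 natrD SD ?S1. Qed.
Lemma SX x n : x \in S -> x ^+ n \in S.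
Proof. by move=> h; elim: n => [|n IH]; rewrite ?expr0 ?S1 // exprS SM. Qed.
End DC.

Lemma Qadj_refl a : in_Qadj a a.
Proof. by move=> S _. Qed.

Lemma Qadj_trans a b c : in_Qadj a b -> in_Qadj b c -> in_Qadj a c.
Proof. by move=> h1 h2 S hS ha; apply: h2 => //; apply: h1. Qed.

Lemma Cheb (S : {pred algC}) (z : algC) : GRing.divring_closed S -> z != 0 ->
  z + z^-1 \in S -> forall n, z ^+ n + (z ^+ n)^-1 \in S.
Proof.
move=> hS z0 h1.
suff H : forall n, (z ^+ n + (z ^+ n)^-1 \in S) /\ (z ^+ n.+1 + (z ^+ n.+1)^-1 \in S).
  by move=> n; case: (H n).
elim=> [|n [Hn Hn1]]; first by rewrite expr0 invr1 expr1; split=> //; apply: SD (S1 hS) (S1 hS).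
split => //.
have -> : z ^+ n.+2 + (z ^+ n.+2)^-1 =
   (z + z^-1) * (z ^+ n.+1 + (z ^+ n.+1)^-1) - (z ^+ n + (z ^+ n)^-1).
  rewrite !exprS; field; rewrite ?mulf_neq0 ?expf_neq0 //.
by rewrite SB ?SM.
Qed.
Fixpoint ABp (n : nat) : {poly algC} * {poly algC} :=
  match n with
  | 0 => (1, 0)
  | n'.+1 => let: (A, B) := ABp n' in ('X * A - B, A + 'X * B)
  end.

Lemma ABp_int n k : ((ABp n).1`_k \is a Num.int) && ((ABp n).2`_k \is a Num.int).
Proof.
elim: n k => [|n IH] k.
  by rewrite /= coef1 coef0 rpred0 andbT; case: (k == 0%N); rewrite ?rpred1 ?rpred0.
move: IH; rewrite /=; case: (ABp n) => A B /= IH.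
have hX : forall C : {poly algC}, (forall j, C`_j \is a Num.int) -> ('X * C)`_k \is a Num.int.
  by move=> C hC; rewrite coefXM; case: (k == 0%N); rewrite ?rpred0.
have hA j : A`_j \is a Num.int by case/andP: (IH j).
have hB j : B`_j \is a Num.int by case/andP: (IH j).
by rewrite coefB coefD rpredB ?rpredD ?hX.
Qed.

Lemma ABp_size n : (size (ABp n).1 <= n.+1)%N && (size (ABp n).2 <= n.+1)%N.
Proof.
elim: n => [|n]; first by rewrite /= size_poly1 size_poly0.
rewrite /=; case: (ABp n) => A B /= /andP[hA hB].
have hXA : (size ('X * A)%R <= n.+2)%N.
  by rewrite (leq_trans (size_polyMleq _ _)) // size_polyX.
have hXB : (size ('X * B)%R <= n.+2)%N.
  by rewrite (leq_trans (size_polyMleq _ _)) // size_polyX.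
apply/andP; split.
  by rewrite (leq_trans (size_polyD _ _)) // size_polyN geq_max hXA (leq_trans hB).
by rewrite (leq_trans (size_polyD _ _)) // geq_max hXB (leq_trans hA).
Qed.

Lemma ABp_pow n : ('X + ('i)%:P) ^+ n = (ABp n).1 + ('i)%:P * (ABp n).2 /\
                  ('X - ('i)%:P) ^+ n = (ABp n).1 - ('i)%:P * (ABp n).2.
Proof.
have ii : ('i)%:P * ('i)%:P = -1 :> {poly algC} by rewrite -polyCM mulCii polyCN.
elim: n => [|n]; first by rewrite /= !expr0 mulr0 addr0 subr0.
rewrite /=; case: (ABp n) => A B /= [h1 h2].
set I := ('i)%:P.
rewrite !exprS h1 h2; split.
  rewrite (_ : ('X + I) * (A + I * B) = ('X * A - B) + I * (A + 'X * B) + (I * I + 1) * B); last by ring.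
  by rewrite ii addNr mul0r addr0.
rewrite (_ : ('X - I) * (A - I * B) = ('X * A - B) - I * (A + 'X * B) + (I * I + 1) * B); last by ring.
by rewrite ii addNr mul0r addr0.
Qed.
Lemma Gp_AB p : Gp p = (ABp p).1 + (ABp p).2.
Proof.
rewrite /Gp (proj1 (ABp_pow p)).
set A := (ABp p).1; set B := (ABp p).2.
have hA k : A`_k \is a Num.int by case/andP: (ABp_int p k).
have hB k : B`_k \is a Num.int by case/andP: (ABp_int p k).
apply/polyP => k.
rewrite coef_map_id0; last by rewrite (Creal_ImP _ _) // rpred0.
rewrite coefCM coefD coefCM coefD.
have -> : (1 + 'i) * (A`_k + 'i * B`_k) = (A`_k - B`_k) + 'i * (A`_k + B`_k) + ('i * 'i + 1) * B`_k by ring.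
rewrite mulCii addNr mul0r addr0 Im_rect //.
  by apply: Rreal_int; rewrite rpredB.
by apply: Rreal_int; rewrite rpredD.
Qed.

Lemma Gp_eq p : ('i * 2)%:P * Gp p =
   (1 + 'i)%:P * ('X + ('i)%:P) ^+ p - (1 - 'i)%:P * ('X - ('i)%:P) ^+ p.
Proof.
rewrite Gp_AB; case: (ABp_pow p) => -> ->.
rewrite polyCD polyCB polyCM polyCD polyC1; ring.
Qed.

Lemma Gp_eval p x : 'i * 2 * (Gp p).[x] =
   (1 + 'i) * (x + 'i) ^+ p - (1 - 'i) * (x - 'i) ^+ p.
Proof.
have := congr1 (fun q => q.[x]) (Gp_eq p).
by rewrite /= !hornerE.
Qed.

Lemma size_Gp p : (size (Gp p) <= p.+1)%N.
Proof.
rewrite Gp_AB (leq_trans (size_polyD _ _)) // geq_max.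
exact: ABp_size.
Qed.
Lemma Gp_int p : Gp p \is a polyOver Num.int.
Proof.
apply/polyOverP => k; rewrite Gp_AB coefD.
by case/andP: (ABp_int p k) => hA hB; rewrite rpredD.
Qed.

Lemma Gp_rat p : exists q : {poly rat}, Gp p = map_poly ratr q.
Proof.
have [q ->] := floorpP (Gp_int p).
exists (map_poly intr q); rewrite -map_poly_comp.
by apply: eq_map_poly => z /=; rewrite ratr_int.
Qed.

Lemma sq1pi : (1 + 'i) ^+ 2 = 'i * 2 :> algC.
Proof. by rewrite expr2 mulrDl !mulrDr mulCii; ring. Qed.
Lemma sq1mi : (1 - 'i) ^+ 2 = - 'i * 2 :> algC.
Proof. by rewrite expr2 mulrBl !mulrBr mulCii; ring. Qed.
Lemma sqm1pi : (-1 + 'i) ^+ 2 = - 'i * 2 :> algC.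
Proof. by rewrite expr2 mulrDl !mulrDr mulCii; ring. Qed.
Lemma sqm1mi : (-1 - 'i) ^+ 2 = 'i * 2 :> algC.
Proof. by rewrite expr2 mulrBl !mulrBr mulCii; ring. Qed.
Lemma sqi2 : ('i * 2) ^+ 2 = -4 :> algC.
Proof. by rewrite exprMn expr2 mulCii; ring. Qed.
Lemma sqmi2 : (- 'i * 2) ^+ 2 = -4 :> algC.
Proof. by rewrite exprMn sqrrN expr2 mulCii; ring. Qed.

Lemma delta_root p : odd p -> root (Gp p) (- delta4 p).
Proof.
move=> op; apply/eqP.
have i2 : 'i * 2 != 0 :> algC by rewrite mulf_neq0 ?neq0Ci ?pnatr_eq0.
apply: (mulfI i2); rewrite mulr0 Gp_eval; apply/eqP; rewrite subr_eq0; apply/eqP.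
have e4 (x : algC) : x ^+ 4 = (x ^+ 2) ^+ 2 by rewrite -exprM.
have : (p %% 4 == 1)%N || (p %% 4 == 3)%N.
  move: op; rewrite {1}(divn_eq p 4) oddD oddM /= andbF /=.
  by case: (p %% 4)%N (ltn_pmod p (isT : (0 < 4)%N)) => [|[|[|[|]]]].
case/orP => /eqP hr; rewrite /delta4 hr /= (divn_eq p 4) hr.
  rewrite !exprD !expr1 mulnC !exprM e4 e4.
  rewrite sqm1pi sqm1mi sqi2 sqmi2.
  have -> : (1 + 'i) * ((-4) ^+ (p %/ 4) * (-1 + 'i)) = (1 + 'i) * (-1 + 'i) * (-4) ^+ (p %/ 4) :> algC by ring.
  have -> : (1 - 'i) * ((-4) ^+ (p %/ 4) * (-1 - 'i)) = (1 - 'i) * (-1 - 'i) * (-4) ^+ (p %/ 4) :> algC by ring.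
  congr (_ * _).
  ring.
have key (x : algC) : x ^+ 4 = -4 -> x * x ^+ (p %/ 4 * 4 + 3) = (-4) ^+ (p %/ 4).+1.
  move=> h4; rewrite -exprS (_ : ((p %/ 4 * 4 + 3).+1 = (p %/ 4).+1 * 4)%N); last by ring.
  by rewrite mulnC exprM h4.
rewrite opprK !key //; first by rewrite e4 sq1mi sqmi2.
by rewrite e4 sq1pi sqi2.
Qed.
Lemma N1_neq1 : (-1 : algC) != 1.
Proof. by rewrite -subr_eq0 -opprD oppr_eq0 (_ : 1 + 1 = 2%:R :> algC) // pnatr_eq0. Qed.

Lemma delta_sq p : delta4 p ^+ 2 = 1.
Proof. by rewrite /delta4; case: ifP; rewrite ?sqrrN expr1n. Qed.

Lemma XdeltaE p : 'X + (delta4 p)%:P = 'X - (- delta4 p)%:P :> {poly algC}.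
Proof. by rewrite polyCN opprK. Qed.

Lemma Gp_factor p : odd p -> Gp p = Hp p * ('X + (delta4 p)%:P).
Proof. by move=> op; rewrite /Hp divpK // XdeltaE dvdp_XsubCl delta_root. Qed.

Lemma i_ne_delta p : 'i != delta4 p.
Proof.
apply/eqP => h; have := delta_sq p; rewrite -h sqrCi => /eqP.
by rewrite (negbTE N1_neq1).
Qed.

Lemma onepi_neq0 : (1 + 'i) != 0 :> algC.
Proof.
apply/eqP => h; have : ('i : algC) = -1 by apply/eqP; rewrite -subr_eq0 opprK addrC h.
move=> hi; have := (@sqrCi algC); rewrite hi sqrrN expr1n => /eqP.
by rewrite eq_sym (negbTE N1_neq1).
Qed.

Lemma onemi_neq0 : (1 - 'i) != 0 :> algC.
Proof.
apply/eqP => h; have : ('i : algC) = 1 by apply/eqP; rewrite eq_sym -subr_eq0 h.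
move=> hi; have := (@sqrCi algC); rewrite hi expr1n => /eqP.
by rewrite eq_sym (negbTE N1_neq1).
Qed.

Lemma i2_neq0 : 'i * 2 != 0 :> algC.
Proof. by rewrite mulf_neq0 ?neq0Ci ?pnatr_eq0. Qed.

Lemma rootGpE p x : root (Gp p) x =
   ((1 + 'i) * (x + 'i) ^+ p == (1 - 'i) * (x - 'i) ^+ p).
Proof.
by rewrite /root -[in RHS]subr_eq0 -Gp_eval mulf_eq0 (negbTE i2_neq0).
Qed.

Lemma Gp_deriv_eval p x : (0 < p)%N -> 'i * 2 * (Gp p)^`().[x] =
   ((1 + 'i) * (x + 'i) ^+ p.-1 - (1 - 'i) * (x - 'i) ^+ p.-1) *+ p.
Proof.
move=> p0.
have := congr1 (fun q => q^`().[x]) (Gp_eq p).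
rewrite /= deriv_mulC derivB !deriv_mulC !deriv_exp derivD derivB derivX derivC.
rewrite subr0 addr0 !mul1r !hornerE /= => ->.
by rewrite !hornerMn !hornerE mulrnBl !mulrnAr.
Qed.

Lemma alpha_ne p a : prime p -> odd p -> root (Hp p) a -> a != - delta4 p.
Proof.
move=> pp op ra; apply/eqP => ha.
set x := - delta4 p.
have p0 : (0 < p)%N by apply: prime_gt0.
have hD : (Gp p)^`().[x] = 0.
  rewrite (Gp_factor op) derivM derivD derivX derivC addr0 mulr1 hornerD hornerM.
  rewrite XdeltaE hornerXsubC subrr mulr0 add0r /x -ha; exact/eqP.
have := Gp_deriv_eval x p0; rewrite hD mulr0 => /esym/eqP.
rewrite mulrn_eq0 (negbTE (lt0n_neq0 p0)) /= subr_eq0 => /eqP hab.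
have := delta_root op; rewrite rootGpE -/x.
rewrite -(prednK p0) !exprSr !mulrA hab => /eqP hE.
have : (1 - 'i) * (x - 'i) ^+ p.-1 * ('i * 2) = 0.
  by rewrite (_ : 'i * 2 = (x + 'i) - (x - 'i)) ?mulrBr ?hE ?subrr //; ring.
move/eqP; rewrite !mulf_eq0 (negbTE onemi_neq0) (negbTE (@neq0Ci algC)) pnatr_eq0 orbF.
rewrite expf_eq0 /= subr_eq0 => /andP[_ /eqP h].
have hd : delta4 p = - 'i by rewrite -h /x opprK.
by have := delta_sq p; rewrite hd sqrrN sqrCi => /eqP; rewrite (negbTE N1_neq1).
Qed.
Lemma nat_order4p p m : prime p -> (m %| 4 * p)%N -> ~~ (m %| 2 * p)%N -> ~~ (m %| 4)%N -> m = (4 * p)%N.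
Proof.
move=> pp hm h2 h4.
have [pm | npm] := boolP (p %| m)%N; last first.
  have cop : coprime m p by rewrite coprime_sym prime_coprime.
  by move: h4; rewrite -(Gauss_dvdl _ cop) hm.
have p0 := prime_gt0 pp.
have [e he] := dvdnP pm; subst m.
clear pm; move: hm h2 h4; rewrite !(mulnC _ p) !dvdn_pmul2l //.
case: e => [|[|[|[|[|e]]]]] //=.
Qed.

Lemma mi_neq0 : (- 'i : algC) != 0.
Proof. by rewrite oppr_eq0 neq0Ci. Qed.

Lemma w_exists p a : prime p -> odd p -> root (Hp p) a ->
  exists w : algC, [/\ (4 * p)%N.-primitive_root w, w ^+ p = - 'i,
                      a * (w - 1) = 'i * (w + 1) & w != 1].
Proof.
move=> pp op ra.
have p0 := prime_gt0 pp.
have hG : root (Gp p) a by rewrite /root (Gp_factor op) hornerM (eqP ra) mul0r.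
have had := alpha_ne pp op ra.
have E : (1 + 'i) * (a + 'i) ^+ p = (1 - 'i) * (a - 'i) ^+ p by apply/eqP; rewrite -rootGpE.
have ami : a - 'i != 0.
  apply/eqP => h; move: E; rewrite h expr0n (gtn_eqF p0) mulr0.
  move/eqP; rewrite mulf_eq0 (negbTE onepi_neq0) expf_eq0 p0 /=.
  rewrite (_ : a = 'i); last by apply/eqP; rewrite -subr_eq0 h.
  by rewrite (_ : 'i + 'i = 'i * 2) ?(negbTE i2_neq0) //; ring.
set w := (a + 'i) / (a - 'i).
have hw : w * (a - 'i) = a + 'i by rewrite /w divfK.
clearbody w.
have hwp : w ^+ p = - 'i.
  have : (a - 'i) ^+ p * ((1 + 'i) * (w ^+ p - - 'i)) = 0.
    rewrite (_ : (a - 'i) ^+ p * ((1 + 'i) * (w ^+ p - - 'i)) = (1 + 'i) * (w * (a - 'i)) ^+ p - (1 - 'i) * (a - 'i) ^+ p + (a - 'i) ^+ p * ((1 + 'i) * 'i + (1 - 'i))); last by rewrite exprMn; ring.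
    rewrite hw E subrr add0r mulrDl mul1r mulCii.
    by rewrite (_ : 'i + -1 + (1 - 'i) = 0 :> algC) ?mulr0 //; ring.
  move/eqP; rewrite !mulf_eq0 expf_eq0 (negbTE ami) andbF (negbTE onepi_neq0) /= subr_eq0.
  by move/eqP.
have hw1 : w != 1.
  apply/eqP => h1; move: hwp; rewrite h1 expr1n => /eqP.
  rewrite -subr_eq0 opprK (_ : 1 + 'i = 1 + 'i) //; exact/negP/onepi_neq0.
have ha : a * (w - 1) = 'i * (w + 1).
  apply/eqP; rewrite -subr_eq0; apply/eqP.
  rewrite (_ : a * (w - 1) - 'i * (w + 1) = w * (a - 'i) - (a + 'i)); last by ring.
  by rewrite hw subrr.
exists w; split => //.
have w4p : w ^+ (4 * p) = 1.
  by rewrite mulnC exprM hwp (exprM _ 2 2) sqrrN sqrCi sqrrN expr1n.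
have p40 : (0 < 4 * p)%N by rewrite muln_gt0 p0.
have [m pm dm] := (@prim_order_exists _ (4 * p)%N w p40 w4p).
suff -> : (4 * p)%N = m by [].
apply/esym/(nat_order4p pp dm).
  rewrite (prim_order_dvd pm) mulnC exprM hwp sqrrN sqrCi; exact: N1_neq1.
rewrite (prim_order_dvd pm); apply/eqP => w4.
have : (p %% 4 == 1)%N || (p %% 4 == 3)%N.
  move: op; rewrite {1}(divn_eq p 4) oddD oddM /= andbF /=.
  by case: (p %% 4)%N (ltn_pmod p (isT : (0 < 4)%N)) => [|[|[|[|]]]].
have hwr : w ^+ (p %% 4) = - 'i by rewrite -hwp {2}(divn_eq p 4) exprD mulnC exprM w4 expr1n mul1r.
case/orP => /eqP hr; move: hwr; rewrite hr => hwr.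
  (* w = -i, a = -1 = - delta *)
  move: had; rewrite /delta4 hr /= => /eqP; apply.
  move: ha; rewrite expr1 in hwr; rewrite hwr => /eqP.
  rewrite -subr_eq0 => /eqP h.
  have : (a + 1) * (1 + 'i) = 0.
    rewrite (_ : (a + 1) * (1 + 'i) = - (a * (- 'i - 1) - 'i * (- 'i + 1)) + ('i * 'i + 1) :> algC); last by ring.
    by rewrite h mulCii oppr0 add0r addNr.
  move/eqP; rewrite mulf_eq0 (negbTE onepi_neq0) orbF addr_eq0 => /eqP //.
have wi : w = 'i.
  have : w * (- 'i) = 1 by rewrite -hwr -exprS w4.
  move=> h; apply: (mulIf mi_neq0); rewrite h mulrN mulCii opprK //.
move: had; rewrite /delta4 hr /= opprK => /eqP; apply.
move: ha; rewrite wi => /eqP; rewrite -subr_eq0 => /eqP h.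
have : (a - 1) * ('i - 1) = 0.
  rewrite (_ : (a - 1) * ('i - 1) = (a * ('i - 1) - 'i * ('i + 1)) + ('i * 'i + 1) :> algC); last by ring.
  by rewrite h mulCii add0r addNr.
move/eqP; rewrite mulf_eq0 => /orP[]; first by rewrite subr_eq0 => /eqP.
by rewrite -oppr_eq0 opprB (negbTE onemi_neq0).
Qed.
Lemma pos_root_exists p (w : algC) : odd p -> w ^+ p = - 'i -> w ^+ 4 != 1 ->
  exists y : algC, [/\ y ^+ (2 * p)%N = -1, 0 <= 'Im y & 0 < 'Re y].
Proof.
move=> op hwp w4.
have w2p : w ^+ (2 * p)%N = -1 by rewrite (mulnC 2 p) exprM hwp sqrrN sqrCi.
have ev (y : algC) : (- y) ^+ (2 * p)%N = y ^+ (2 * p)%N by rewrite !exprM sqrrN.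
have cj (y : algC) : y ^+ (2 * p)%N = -1 -> (y^*) ^+ (2 * p)%N = -1.
  by move=> h; rewrite -rmorphXn h rmorphN1.
have Rw : 'Re w != 0.
  apply/eqP => r0.
  have hw : w = 'i * 'Im w by rewrite {1}[w]Crect r0 add0r.
  set t := 'Im w in hw.
  have Rt : t \is Num.real := Creal_Im w.
  have t2p : t ^+ (2 * p)%N = 1.
    move: w2p; rewrite hw exprMn exprM sqrCi -signr_odd op expr1 mulN1r.
    by move/eqP; rewrite eqr_opp => /eqP.
  have nt : `|t| = 1.
    apply/eqP; rewrite -(@pexpr_eq1 _ _ (2 * p)) ?normr_ge0 //; last by rewrite muln_gt0 /=; case: (p) op.
    by rewrite -normrX t2p normr1.
  have t2 : t ^+ 2 = 1 by rewrite -real_normK // nt expr1n.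
  move: w4; rewrite hw exprMn !(exprM _ 2 2) sqrCi t2 sqrrN !expr1n mulr1 eqxx //.
have [y1 [y1p y1I y1R]] : exists y1 : algC, [/\ y1 ^+ (2 * p)%N = -1, 0 <= 'Im y1 & 'Re y1 != 0].
  have [hI|hI] := real_ge0P (Creal_Im w); first by exists w.
  exists (- w); rewrite ev w2p !raddfN /= oppr_ge0 (ltW hI) oppr_eq0; split => //.
have [hR|hR|hR] := real_ltgtP (Creal_Re y1) (@real0 _).
- exists (- y1^*); rewrite ev cj // !raddfN /= Im_conj Re_conj opprK oppr_gt0; split => //.
- by exists y1.
- by move/eqP: y1R.
Qed.

Lemma zeta_prim p (w : algC) : prime p -> odd p -> w ^+ p = - 'i -> w ^+ 4 != 1 ->
  (4 * p)%N.-primitive_root (zeta4p p).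
Proof.
move=> pp op hwp w4.
have p0 := prime_gt0 pp.
have n0 : (0 < 2 * p)%N by rewrite muln_gt0.
have z2p : zeta4p p ^+ (2 * p)%N = -1 by rewrite /zeta4p rootCK.
have z4p : zeta4p p ^+ (4 * p) = 1.
  have e : (4 * p = 2 * p * 2)%N by lia.
  by rewrite e exprM z2p sqrrN expr1n.
have p40 : (0 < 4 * p)%N by rewrite muln_gt0 p0.
have [m pm dm] := (@prim_order_exists _ (4 * p)%N _ p40 z4p).
suff -> : (4 * p)%N = m by [].
apply/esym/(nat_order4p pp dm).
  by rewrite (prim_order_dvd pm) z2p; exact: N1_neq1.
rewrite (prim_order_dvd pm); apply/eqP => z4.
have z2 : zeta4p p ^+ 2 = -1.
  rewrite -z2p (_ : (2 * p = 4 * p./2 + 2)%N); last first.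
    by rewrite -{1}(odd_double_half p) op -muln2; lia.
  by rewrite exprD exprM z4 expr1n mul1r.
have Rz : 'Re (zeta4p p) = 0.
  have : (zeta4p p - 'i) * (zeta4p p + 'i) = 0.
    rewrite (_ : (zeta4p p - 'i) * (zeta4p p + 'i) = zeta4p p ^+ 2 - 'i * 'i); last by ring.
    by rewrite z2 mulCii subrr.
  move/eqP; rewrite mulf_eq0 subr_eq0 addr_eq0 => /orP[] /eqP ->.
    by rewrite Re_i.
  by rewrite raddfN /= Re_i oppr0.
have [y [yp yI yR]] := pos_root_exists op hwp w4.
have := rootC_Re_max n0 yp yI; rewrite -/(zeta4p p) Rz.
by rewrite real_leNgt ?yR // ?real0 //; apply: gtr0_real.
Qed.
Definition sC (z : algC) := z + z^-1.

Lemma Qadj_pow z k : z != 0 -> in_Qadj (sC z) (sC (z ^+ k)).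
Proof. by move=> z0 S hS h; apply: (Cheb hS z0 h). Qed.

Lemma Qadj_prim n (z y : algC) : (0 < n)%N -> n.-primitive_root z -> y ^+ n = 1 ->
  in_Qadj (sC z) (sC y).
Proof.
move=> n0 pz yn.
have [k ->] := prim_rootP pz yn.
apply: Qadj_pow; apply/eqP => z0.
by move: (prim_expr_order pz); rewrite z0 expr0n (gtn_eqF n0) => /eqP; rewrite eq_sym oner_eq0.
Qed.

Section WProps.
Variables (p : nat) (a w : algC).
Hypotheses (pp : prime p) (hwp : w ^+ p = - 'i) (ha : a * (w - 1) = 'i * (w + 1)) (hw1 : w != 1).

Lemma w_neq0 : w != 0.
Proof.
apply/eqP => w0; move: hwp; rewrite w0 expr0n (gtn_eqF (prime_gt0 pp)) => /eqP.
by rewrite eq_sym oppr_eq0 (negbTE (@neq0Ci algC)).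
Qed.

Lemma wm1 : w - 1 != 0. Proof. by rewrite subr_eq0. Qed.

Lemma a_eq : a = 'i * (w + 1) / (w - 1).
Proof. by rewrite -ha mulfK // wm1. Qed.

Lemma ami : a - 'i != 0.
Proof.
apply/eqP => h; have ai : a = 'i by apply/eqP; rewrite -subr_eq0 h.
move: ha; rewrite ai => h2.
have : 'i * 2%:R = 0 :> algC.
  rewrite (_ : 'i * 2%:R = 'i * (w + 1) - 'i * (w - 1) :> algC); last by ring.
  by rewrite -h2 subrr.
by move/eqP; rewrite mulf_eq0 (negbTE (@neq0Ci algC)) pnatr_eq0.
Qed.

Lemma api : a + 'i != 0.
Proof.
apply/eqP => h; have ai : a = - 'i by apply/eqP; rewrite -subr_eq0 opprK h.
move: ha; rewrite ai => h2.
have : 'i * (w * 2%:R) = 0 :> algC.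
  rewrite (_ : 'i * (w * 2%:R) = 'i * (w + 1) - - 'i * (w - 1) :> algC); last by ring.
  by rewrite -h2 subrr.
by move/eqP; rewrite !mulf_eq0 (negbTE (@neq0Ci algC)) (negbTE w_neq0) pnatr_eq0.
Qed.

Lemma w_of_a : w = (a + 'i) / (a - 'i).
Proof.
apply: (mulIf ami); rewrite divfK ?ami //.
apply/eqP; rewrite -subr_eq0; apply/eqP.
rewrite (_ : w * (a - 'i) - (a + 'i) = a * (w - 1) - 'i * (w + 1)); last by ring.
by rewrite ha subrr.
Qed.

Lemma Qadj_a_s : in_Qadj a (sC w).
Proof.
move=> S hS hA.
have -> : sC w = (2%:R * a ^+ 2 - 2%:R) / (a ^+ 2 + 1).
  have e : sC w = (2%:R * a ^+ 2 + 2%:R * ('i * 'i)) / (a ^+ 2 - 'i * 'i).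
    rewrite /sC w_of_a invf_div.
    have hden : a ^+ 2 - 'i * 'i = (a - 'i) * (a + 'i) by ring.
    rewrite hden; field.
    by rewrite ami api.
  by rewrite e mulCii mulrN1 opprK.
by apply: Sdiv => //; [apply: SB => //; [apply: SM => //; [apply: Sn | apply: SX] | apply: Sn] | apply: SD => //; [apply: SX | apply: S1]].
Qed.

Lemma Qadj_s_a : in_Qadj (sC w) a.
Proof.
move=> S hS hs.
have w0 := w_neq0.
have hC n : sC (w ^+ n) \in S by apply: (Cheb hS w0 hs).
have p0 := prime_gt0 pp.
have e1 : w ^+ p.+1 = - 'i * w by rewrite exprSr hwp.
have e2 : w ^+ p.-1 = - 'i / w.
  by rewrite -hwp -{2}(prednK p0) exprSr mulfK.
have den : 2%:R * (2%:R - sC w) != 0.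
  rewrite mulf_neq0 ?pnatr_eq0 //.
  rewrite /sC (_ : 2%:R - (w + w^-1) = - (w - 1) ^+ 2 / w); last by field.
  by rewrite mulf_neq0 ?invr_eq0 // oppr_eq0 expf_eq0 /= wm1.
have -> : a = (sC (w ^+ p.+1) - sC (w ^+ p.-1)) / (2%:R * (2%:R - sC w)).
  apply: (mulIf den); rewrite divfK //.
  rewrite /sC e1 e2 invfM invf_div invrN invCi opprK a_eq.
  by field; rewrite ?wm1 ?w0.
by apply: Sdiv => //; [apply: SB | apply: SM => //; [apply: Sn | apply: SB => //; apply: Sn]].
Qed.

End WProps.
Lemma Gp_neq0 p : odd p -> Gp p != 0.
Proof.
move=> op; apply/eqP => G0.
have := Gp_eval p 0; rewrite G0 horner0 mulr0 !add0r.
rewrite (_ : (- 'i) ^+ p = - ('i ^+ p) :> algC); last by rewrite exprNn -signr_odd op expr1 mulN1r.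
move/eqP; rewrite eq_sym mulrN opprK -mulrDl (_ : 1 + 'i + (1 - 'i) = 2%:R :> algC); last by ring.
by rewrite mulf_eq0 pnatr_eq0 expf_eq0 (negbTE (@neq0Ci algC)) andbF.
Qed.

Lemma upper p a : odd p -> root (Hp p) a -> (size (minCpoly a) <= p)%N.
Proof.
move=> op ra.
have [q hq] := Gp_rat p.
pose d0 : rat := if (p %% 4 == 1)%N then 1 else -1.
have hd : map_poly ratr ('X + d0%:P) = 'X + (delta4 p)%:P :> {poly algC}.
  rewrite rmorphD /= map_polyX map_polyC /= /d0 /delta4.
  by case: ifP => _; rewrite ?rmorph1 ?rmorphN1.
have hH : Hp p = map_poly ratr (q %/ ('X + d0%:P)) by rewrite map_divp -hq hd.
have Hn0 : Hp p != 0.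
  apply/eqP => h0; have := Gp_factor op; rewrite h0 mul0r; apply/eqP; exact: Gp_neq0.
have [m0 [hm _] hmin] := minCpolyP a.
have dv : (m0 %| q %/ ('X + d0%:P))%R by rewrite -hmin -hH.
have h0n0 : q %/ ('X + d0%:P) != 0 by move: Hn0; rewrite hH map_poly_eq0.
rewrite hm size_map_poly (leq_trans (dvdp_leq h0n0 dv)) //.
rewrite -(size_map_poly (ratr : {rmorphism rat -> algC})) -hH /Hp size_divp; last by rewrite -size_poly_eq0 size_XaddC.
by rewrite size_XaddC /= leq_subLR add1n size_Gp.
Qed.
Definition fC (y : algC) := 'i * (y + 1) / (y - 1).

Lemma fC_inj y1 y2 : y1 != 1 -> y2 != 1 -> fC y1 = fC y2 -> y1 = y2.
Proof.
move=> h1 h2 /eqP; rewrite /fC eqr_div ?subr_eq0 // => /eqP e.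
have : 'i * 2%:R * (y2 - y1) = 0.
  rewrite (_ : 'i * 2%:R * (y2 - y1) = 'i * (y1 + 1) * (y2 - 1) - 'i * (y2 + 1) * (y1 - 1)); last by ring.
  by rewrite e subrr.
move/eqP; rewrite !mulf_eq0 (negbTE (@neq0Ci algC)) pnatr_eq0 /= subr_eq0 => /eqP //.
Qed.

Lemma mi_pow4 j : (- 'i : algC) ^+ (4 * j).+1 = - 'i.
Proof. by rewrite exprS exprM (exprM _ 2 2) sqrrN sqrCi sqrrN !expr1n mulr1. Qed.

Lemma nat_uniqQ p j1 j2 : prime p -> odd p -> (j1 < p)%N -> (j2 < p)%N ->
  (p %| (4 * j1).+1)%N -> (p %| (4 * j2).+1)%N -> j1 = j2.
Proof.
move=> pp op.
have c4 : coprime p 4.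
  rewrite prime_coprime //; apply/negP => h.
  by move: (@dvdn_leq p 4 isT h) pp op; case: (p) h => [|[|[|[|[|]]]]].
wlog le12 : j1 j2 / (j1 <= j2)%N.
  move=> W h1 h2 d1 d2; case: (leqP j1 j2) => [le|/ltnW le]; first exact: W.
  by apply/esym/W.
move=> h1 h2 d1 d2.
have : (p %| 4 * (j2 - j1))%N.
  by rewrite mulnBr (_ : (4 * j2 - 4 * j1 = (4 * j2).+1 - (4 * j1).+1)%N) ?dvdn_sub // subSS.
rewrite Gauss_dvdr // => d.
have : (j2 - j1 < p)%N by rewrite (leq_ltn_trans (leq_subr _ _)).
case e : (j2 - j1)%N => [|x]; first by move/eqP: e; rewrite subn_eq0 => e _; apply/eqP; rewrite eqn_leq le12 e.
by rewrite -e ltnNge (dvdn_leq _ d) // e.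
Qed.

Lemma count_bad p : prime p -> odd p ->
  (count (fun j => p %| (4 * j).+1)%N (iota 0 p) <= 1)%N.
Proof.
move=> pp op; rewrite -size_filter.
have u : uniq [seq j <- iota 0 p | (p %| (4 * j).+1)%N] by rewrite filter_uniq ?iota_uniq.
have mem j : j \in [seq j <- iota 0 p | (p %| (4 * j).+1)%N] -> (j < p)%N && (p %| (4 * j).+1)%N.
  by rewrite mem_filter mem_iota add0n andbC.
move: u mem; case: [seq j <- iota 0 p | _] => [|x [|y t]] //= /andP[nx _] mem.
exfalso; move: nx; rewrite inE negb_or => /andP[/eqP nxy _]; apply: nxy.
have /andP[hx dx] := mem x (mem_head _ _).
have /andP[hy dy] : (y < p)%N && (p %| (4 * y).+1)%N by apply: mem; rewrite !inE eqxx orbT.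
exact: (nat_uniqQ pp op hx hy dx dy).
Qed.
Lemma conj_root p a (w : algC) j : prime p -> (4 * p)%N.-primitive_root w ->
  w ^+ p = - 'i -> a = fC w -> (j < p)%N -> ~~ (p %| (4 * j).+1)%N ->
  root (minCpoly a) (fC (w ^+ (4 * j).+1)).
Proof.
move=> pp pw hwp ha jp nd.
have cop : coprime (4 * j).+1 (4 * p).
  rewrite coprimeMr; apply/andP; split.
    by rewrite -coprime_modl -addn1 mulnC modnMDl.
  by rewrite coprime_sym prime_coprime.
have [u hu] := Qn_aut_exists cop.
have w4p := prim_expr_order pw.
have ui : u 'i = - (w ^+ (4 * j).+1) ^+ p.
  by rewrite -{1}(opprK 'i) -hwp rmorphN rmorphXn hu.
have ua : u a = fC (w ^+ (4 * j).+1).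
  rewrite ha /fC fmorph_div rmorphM rmorphB rmorphD rmorph1 /= ui hu //.
  by rewrite -exprM mulnC exprM hwp mi_pow4 opprK.
by rewrite -ua -(minCpoly_aut u) root_minCpoly.
Qed.

Lemma lower p a (w : algC) : prime p -> odd p -> (4 * p)%N.-primitive_root w ->
  w ^+ p = - 'i -> a = fC w -> (p.-1 < size (minCpoly a))%N.
Proof.
move=> pp op pw hwp ha.
set J := [seq j <- iota 0 p | ~~ (p %| (4 * j).+1)%N].
set rs := [seq fC (w ^+ (4 * j).+1) | j <- J].
have memJ j : j \in J -> (j < p)%N && ~~ (p %| (4 * j).+1)%N.
  by rewrite mem_filter mem_iota add0n andbC.
have ne1 j : w ^+ (4 * j).+1 != 1.
  apply/eqP => h; move: (congr1 (fun x => x ^+ p) h).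
  rewrite -exprM mulnC exprM hwp mi_pow4 expr1n => /eqP.
  rewrite eq_sym -subr_eq0 opprK; exact/negP/onepi_neq0.
have Hroots : all (root (minCpoly a)) rs.
  apply/allP => x /mapP[j /memJ /andP[jp nd] ->]; exact: (conj_root pp pw hwp ha jp nd).
have Huniq : uniq rs.
  rewrite map_inj_in_uniq ?filter_uniq ?iota_uniq //.
  move=> j1 j2 /memJ /andP[h1 _] /memJ /andP[h2 _] /(fC_inj (ne1 j1) (ne1 j2)) /eqP.
  rewrite (eq_prim_root_expr pw) !modn_small; last 2 first.
  - by lia.
  - by lia.
  by rewrite eqSS eqn_mul2l /= => /eqP.
have hm := max_poly_roots (negbT (minCpoly_eq0 a)) Hroots Huniq.
suff hs : (p.-1 <= size rs)%N by apply: leq_ltn_trans hm.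
rewrite /rs size_map /J size_filter.
have := count_predC (fun j => p %| (4 * j).+1)%N (iota 0 p); rewrite size_iota.
have := count_bad pp op.
rewrite (_ : count (fun j => ~~ (p %| (4 * j).+1)%N) (iota 0 p) = count (predC (fun j => (p %| (4 * j).+1)%N)) (iota 0 p)) //.
move: (count _ (iota 0 p)) (count (predC _) _) => c1 c2.
lia.
Qed.
Theorem lemma7 (p : nat) (alpha : algC) :
  prime p -> odd p -> root (Hp p) alpha ->
  (forall b : algC,
     in_Qadj alpha b <-> in_Qadj (zeta4p p + (zeta4p p)^-1) b) /\
  (size (minCpoly alpha)).-1 = p.-1 /\
  (forall b : algC,
     in_Qadj ((zeta4p p) ^+ 4 + ((zeta4p p) ^+ 4)^-1) b -> in_Qadj alpha b).
Proof.
move=> pp op ra.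
have [w [pw hwp ha hw1]] := w_exists pp op ra.
have p1 := prime_gt1 pp.
have p40 : (0 < 4 * p)%N by lia.
have w4 : w ^+ 4 != 1.
  rewrite -(prim_order_dvd pw); apply/negP => /(@dvdn_leq _ 4 isT) h; lia.
have pz := zeta_prim pp op hwp w4.
have aF : alpha = fC w by rewrite /fC -ha mulfK // subr_eq0.
have Q1 : in_Qadj alpha (sC w) := Qadj_a_s pp hwp ha.
have Q2 : in_Qadj (sC w) alpha := Qadj_s_a pp hwp ha hw1.
have Q3 : in_Qadj (sC (zeta4p p)) (sC w) := Qadj_prim p40 pz (prim_expr_order pw).
have Q4 : in_Qadj (sC w) (sC (zeta4p p)) := Qadj_prim p40 pw (prim_expr_order pz).
have z0 : zeta4p p != 0.
  apply/eqP => h; move: (prim_expr_order pz); rewrite h expr0n (gtn_eqF p40) => /eqP.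
  by rewrite eq_sym oner_eq0.
split; last split.
- move=> b; split => h.
    exact: (Qadj_trans (Qadj_trans Q3 Q2) h).
  exact: (Qadj_trans (Qadj_trans Q1 Q4) h).
- have up := upper op ra.
  have lo := lower pp op pw hwp aF.
  have -> : size (minCpoly alpha) = p by lia.
  by [].
- move=> b h.
  exact: (Qadj_trans (Qadj_trans (Qadj_trans Q1 Q4) (Qadj_pow 4 z0)) h).
Qed.
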